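(* Let $\{(\mathbf{x}_i,y_i)\}_{i=1}^n\subset\mathbb{R}^p\times\mathbb{R}$, $s>0$, and let $\mathcal{K}$ be a Mercer kernel. For $\lambda>0$ consider $$\Psi(\widetilde C)=\frac1{n^2}\sum_{i,j=1}^n\omega^s_{i,j}\big(y_i-y_j+(\mathbf{x}_j-\mathbf{x}_i)^T\widetilde C\mathbf{k}_i^{1/2}\big)^2+\lambda\sum_{j=1}^p\|\widetilde{\mathbf{c}}^j\|_2,\qquad \widetilde C\in\mathbb{R}^{p\times n}.$$ Let $$\lambda_{\max}=\max_{1\le k\le p}\frac2{n^2}\Big\|\sum_{i,j=1}^n\omega^s_{i,j}(y_i-y_j)(x_i^k-x_j^k)\mathbf{k}_i^{1/2}\Big\|_2.$$ Then for all $\lambda\ge\lambda_{\max}$, the optimal solution of $\min_{\widetilde C}\Psi(\widetilde C)$ is $\widetilde C=0$ (the zero $p\times n$ matrix minimizes $\Psi$).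
   Context: $\omega^s_{i,j}=\exp(-\|\mathbf{x}_j-\mathbf{x}_i\|^2/(2s^2))$; $x_i^k$ is the $k$-th coordinate of $\mathbf{x}_i$. $K=[\mathcal{K}(\mathbf{x}_i,\mathbf{x}_j)]_{i,j=1}^n$, $K^{1/2}$ its symmetric positive semidefinite square root, $\mathbf{k}_i^{1/2}$ the $i$-th column of $K^{1/2}$; $\widetilde{\mathbf{c}}^j$ is the $j$-th row of $\widetilde C$ and $\|\cdot\|_2$ the Euclidean norm. *)

(* Defs.v *)
From HB Require Import structures.
From mathcomp Require Import all_boot all_order all_algebra.
From mathcomp Require Import all_classical all_reals all_analysis.
Set Implicit Arguments. Unset Strict Implicit. Unset Printing Implicit Defensive.
Import Order.TTheory GRing.Theory Num.Theory.
Import numFieldNormedType.Exports.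
Local Open Scope ring_scope.

Definition sqnorm (R : realType) (m : nat) (v : 'rV[R]_m) : R :=
  \sum_(k < m) v ord0 k ^+ 2.

Definition norm2 (R : realType) (m : nat) (v : 'rV[R]_m) : R :=
  Num.sqrt (sqnorm v).

Definition omega (R : realType) (p n : nat) (s : R) (x : 'I_n -> 'rV[R]_p)
  (i j : 'I_n) : R :=
  expR (- (sqnorm (x j - x i)) / (2 * s ^+ 2)).

Definition mercer_kernel (R : realType) (p : nat)
  (Kf : 'rV[R]_p -> 'rV[R]_p -> R) : Prop :=
  continuous (fun z : 'rV[R]_p * 'rV[R]_p => Kf z.1 z.2) /\
  (forall u v, Kf u v = Kf v u) /\
  (forall (m : nat) (z : 'I_m -> 'rV[R]_p) (c : 'I_m -> R),
     0 <= \sum_(a < m) \sum_(b < m) c a * c b * Kf (z a) (z b)).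

Definition gram (R : realType) (p n : nat) (Kf : 'rV[R]_p -> 'rV[R]_p -> R)
  (x : 'I_n -> 'rV[R]_p) : 'M[R]_n :=
  \matrix_(i, j) Kf (x i) (x j).

Definition is_psd_sqrt (R : realType) (n : nat) (K S : 'M[R]_n) : Prop :=
  S^T = S /\ (forall v : 'rV[R]_n, 0 <= (v *m S *m v^T) ord0 ord0) /\ S *m S = K.

(* The objective Psi. Khalf's i-th column is k_i^{1/2}; x_i are row vectors,
   so (x_j - x_i)^T C k_i^{1/2} is ((x j - x i) *m C *m col i Khalf) 0 0. *)
Definition Psi (R : realType) (p n : nat) (s lambda : R)
  (x : 'I_n -> 'rV[R]_p) (y : 'I_n -> R) (Khalf : 'M[R]_n)
  (C : 'M[R]_(p, n)) : R :=
  (n%:R ^+ 2)^-1 * \sum_(i < n) \sum_(j < n)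
     omega s x i j * (y i - y j + ((x j - x i) *m C *m col i Khalf) ord0 ord0) ^+ 2
  + lambda * \sum_(j < p) norm2 (row j C).

Definition lambda_max (R : realType) (p n : nat) (s : R)
  (x : 'I_n -> 'rV[R]_p) (y : 'I_n -> R) (Khalf : 'M[R]_n) : R :=
  \big[Num.max/0]_(k < p)
    (2 / (n%:R ^+ 2) *
      norm2 (\sum_(i < n) \sum_(j < n)
               (omega s x i j * (y i - y j) * (x i ord0 k - x j ord0 k))
                 *: (col i Khalf)^T)).

(* Main.v *)
Require Import Defs.
From HB Require Import structures.
From mathcomp Require Import all_boot all_order all_algebra.
From mathcomp Require Import all_classical all_reals all_analysis.
From mathcomp Require Import ring lra.
Import Order.TTheory GRing.Theory Num.Theory.
Local Open Scope ring_scope.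

Lemma dsum (R : realType) (m : nat) (f g : 'I_m -> R) :
  \sum_a \sum_b f a * g b = (\sum_a f a) * (\sum_b g b).
Proof. rewrite mulr_suml; apply: eq_bigr => a _; by rewrite mulr_sumr. Qed.

Lemma lagrange (R : realType) (m : nat) (u v : 'I_m -> R) :
  2 * ((\sum_a u a ^+ 2) * (\sum_b v b ^+ 2) - (\sum_a u a * v a) ^+ 2) =
  \sum_a \sum_b (u a * v b - u b * v a) ^+ 2.
Proof.
have E : forall a b, (u a * v b - u b * v a) ^+ 2 =
   u a ^+ 2 * v b ^+ 2 + v a ^+ 2 * u b ^+ 2 - 2 * ((u a * v a) * (u b * v b)).
  by move=> a b; ring.
rewrite [RHS](eq_bigr _ (fun a _ => eq_bigr _ (fun b _ => E a b))).
have F : forall (f g h : 'I_m -> R), \sum_a (f a + g a - 2 * h a) =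
   \sum_a f a + \sum_a g a - 2 * \sum_a h a.
  by move=> f g h; rewrite big_split /= sumrN big_split /= -mulr_sumr.
rewrite [RHS](eq_bigr _ (fun a _ => F _ _ _)) F.
rewrite (@dsum _ _ (fun a => u a ^+ 2) (fun b => v b ^+ 2)).
rewrite (@dsum _ _ (fun a => v a ^+ 2) (fun b => u b ^+ 2)).
rewrite (@dsum _ _ (fun a => u a * v a) (fun b => u b * v b)).
ring.
Qed.

Lemma cs (R : realType) (m : nat) (u v : 'I_m -> R) :
  `|\sum_a u a * v a| <= Num.sqrt (\sum_a u a ^+ 2) * Num.sqrt (\sum_a v a ^+ 2).
Proof.
have h : (\sum_a u a * v a) ^+ 2 <= (\sum_a u a ^+ 2) * (\sum_b v b ^+ 2).
  have H2 : 0 <= 2 * ((\sum_a u a ^+ 2) * (\sum_b v b ^+ 2) - (\sum_a u a * v a) ^+ 2).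
    rewrite lagrange.
    by apply: sumr_ge0 => a _; apply: sumr_ge0 => b _; apply: sqr_ge0.
  by move: H2; rewrite pmulr_rge0 // subr_ge0.
rewrite -sqrtrM; last by apply: sumr_ge0 => a _; apply: sqr_ge0.
by rewrite -sqrtr_sqr ler_sqrt // mulr_ge0 //; apply: sumr_ge0 => a _; apply: sqr_ge0.
Qed.

Lemma bexp (R : realType) (p n : nat) (v : 'rV[R]_p) (C : 'M[R]_(p, n)) (K : 'M[R]_n) i :
  (v *m C *m col i K) ord0 ord0 = \sum_k \sum_l v ord0 k * C k l * K l i.
Proof.
rewrite mxE exchange_big /=; apply: eq_bigr => l _.
by rewrite !mxE big_distrl /=.
Qed.

Lemma gexp (R : realType) (n : nat) (f : 'I_n -> 'I_n -> R) (K : 'M[R]_n) l :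
  (\sum_(i < n) \sum_(j < n) f i j *: (col i K)^T) ord0 l = \sum_i \sum_j f i j * K l i.
Proof.
rewrite summxE; apply: eq_bigr => i _; rewrite summxE; apply: eq_bigr => j _.
by rewrite !mxE.
Qed.

Lemma reorder4 (R : realType) (n p : nat) (F : 'I_n -> 'I_n -> 'I_p -> 'I_n -> R) :
  \sum_i \sum_j \sum_k \sum_l F i j k l = \sum_k \sum_l \sum_i \sum_j F i j k l.
Proof.
rewrite exchange_big /=.
have -> : \sum_j \sum_i \sum_k \sum_l F i j k l = \sum_j \sum_k \sum_i \sum_l F i j k l.
  by apply: eq_bigr => j _; rewrite exchange_big.
rewrite exchange_big /=; apply: eq_bigr => k _.
have -> : \sum_j \sum_i \sum_l F i j k l = \sum_j \sum_l \sum_i F i j k l.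
  by apply: eq_bigr => j _; rewrite exchange_big.
rewrite exchange_big /=; apply: eq_bigr => l _.
by rewrite exchange_big.
Qed.

Theorem theorem9 (R : realType) (p n : nat) (x : 'I_n -> 'rV[R]_p) (y : 'I_n -> R)
  (s : R) (hs : 0 < s) (Kf : 'rV[R]_p -> 'rV[R]_p -> R) (hK : mercer_kernel Kf)
  (Khalf : 'M[R]_n) (hKhalf : is_psd_sqrt (gram Kf x) Khalf)
  (lambda : R) (hl : 0 < lambda) (hlmax : lambda_max s x y Khalf <= lambda) :
  forall C : 'M[R]_(p, n), Psi s lambda x y Khalf 0 <= Psi s lambda x y Khalf C.
Proof.
move=> C.
set N := (n%:R ^+ 2 : R)^-1.
have N0 : 0 <= N by rewrite invr_ge0 exprn_ge0.
set w := omega s x.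
have w0 : forall i j, 0 <= w i j by move=> i j; apply: expR_ge0.
set G := fun k : 'I_p => \sum_(i < n) \sum_(j < n)
               (w i j * (y i - y j) * (x i ord0 k - x j ord0 k)) *: (col i Khalf)^T.
have key : \sum_i \sum_j w i j * (y i - y j) *
             ((x j - x i) *m C *m col i Khalf) ord0 ord0
         = - \sum_k \sum_l C k l * G k ord0 l.
  rewrite -sumrN.
  have -> : \sum_k - \sum_l C k l * G k ord0 l =
     \sum_k \sum_l \sum_i \sum_j (w i j * (y i - y j) * (x j ord0 k - x i ord0 k) * C k l * Khalf l i).
    apply: eq_bigr => k _; rewrite -sumrN; apply: eq_bigr => l _.
    rewrite /G gexp mulr_sumr -sumrN; apply: eq_bigr => i _.
    rewrite mulr_sumr -sumrN; apply: eq_bigr => j _.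
    rewrite -(opprB (x i ord0 k)). ring.
  rewrite -reorder4; apply: eq_bigr => i _; apply: eq_bigr => j _.
  rewrite bexp mulr_sumr; apply: eq_bigr => k _.
  rewrite mulr_sumr; apply: eq_bigr => l _.
  rewrite !mxE. ring.
have P0 : Psi s lambda x y Khalf 0 = N * \sum_i \sum_j w i j * (y i - y j) ^+ 2.
  rewrite /Psi [X in lambda * X]big1 ?mulr0 ?addr0.
    congr (_ * _); apply: eq_bigr => i _; apply: eq_bigr => j _.
    by rewrite mulmx0 mul0mx mxE addr0.
  move=> j _; rewrite /norm2 /sqnorm big1 ?sqrtr0 // => l _.
  by rewrite !mxE expr0n.
rewrite P0 /Psi.
have H1 : \sum_i \sum_j w i j * (y i - y j) ^+ 2 + 2 * (- \sum_k \sum_l C k l * G k ord0 l)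
   <= \sum_i \sum_j w i j * (y i - y j + ((x j - x i) *m C *m col i Khalf) ord0 ord0) ^+ 2.
  rewrite -key mulr_sumr -big_split /=; apply: ler_sum => i _.
  rewrite mulr_sumr -big_split /=; apply: ler_sum => j _.
  set b := ((x j - x i) *m C *m col i Khalf) ord0 ord0.
  have : 0 <= w i j * b ^+ 2 by rewrite mulr_ge0 ?sqr_ge0.
  move=> h. have -> : w i j * (y i - y j + b) ^+ 2 =
     w i j * (y i - y j) ^+ 2 + 2 * (w i j * (y i - y j) * b) + w i j * b ^+ 2 by ring.
  by rewrite lerDl.
have H2 : forall k, 2 * N * (\sum_l C k l * G k ord0 l) <= lambda * norm2 (row k C).
  move=> k.
  have hk : 2 * N * norm2 (G k) <= lambda.
    apply: le_trans hlmax; rewrite /lambda_max.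
    have := le_bigmax 0 (fun k0 : 'I_p => 2 / (n%:R ^+ 2) * norm2 (G k0)) k.
    by rewrite /N.
  have hcs : `|\sum_l C k l * G k ord0 l| <= norm2 (row k C) * norm2 (G k).
    rewrite /norm2.
    have := @cs _ _ (fun l => C k l) (fun l => G k ord0 l).
    have -> : sqnorm (row k C) = \sum_l C k l ^+ 2.
      by apply: eq_bigr => l _; rewrite mxE.
    by rewrite /sqnorm.
  apply: (le_trans (ler_wpM2l _ (ler_norm _))); first by rewrite mulr_ge0.
  apply: (le_trans (ler_wpM2l _ hcs)); first by rewrite mulr_ge0.
  rewrite mulrCA [X in _ <= X]mulrC; apply: ler_wpM2l; first by rewrite /norm2 sqrtr_ge0.
  exact: hk.
have H3 : 0 <= N * (2 * (- \sum_k \sum_l C k l * G k ord0 l)) + lambda * \sum_j norm2 (row j C).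
  set T := fun k => \sum_l C k l * G k ord0 l.
  have h : 0 <= \sum_k (lambda * norm2 (row k C) - 2 * N * T k).
    by apply: sumr_ge0 => k _; rewrite subr_ge0; apply: H2.
  move: h; rewrite sumrB -!mulr_sumr.
  have -> : N * (2 * - \sum_k T k) + lambda * \sum_j norm2 (row j C) =
     lambda * \sum_k norm2 (row k C) - 2 * N * \sum_k T k by ring.
  by [].
have H4 := ler_wpM2l N0 H1.
move: H4 H3; rewrite mulrDr.
set A := N * _. set B := N * _. set L := lambda * _. set D := N * _.
move=> H4 H3. lra.
Qed.
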